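(* Let $d\in\mathbb Z^+$ and define $\mathbb P_{\boldsymbol 0}:=1$, $\mathbb P_{\boldsymbol m}:=\frac{(|\boldsymbol m|+d)!}{\boldsymbol m!\,d!}+\sum_{\boldsymbol w\le\boldsymbol m,\,\boldsymbol w\ne\boldsymbol m}\mathbb P_{\boldsymbol w}(|\boldsymbol m|-|\boldsymbol w|+1)!$ for $\boldsymbol m\in\mathscr F\setminus\{\boldsymbol 0\}$. Let $\tau_0:=1$, $\tau_k:=\sum_{j=0}^{k-1}(k-j+1)\tau_j$ for $k\ge1$. Then $$\mathbb P_{\boldsymbol m}\le\frac{2\,\tau_{|\boldsymbol m|}\,(|\boldsymbol m|+d-1)!}{(d-1)!}\qquad\text{for all }\boldsymbol m\in\mathscr F\setminus\{\boldsymbol 0\}.$$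
   Context: $\mathscr F$ is the set of finitely supported multi-indices in $\mathbb N_0^{\mathbb N}$; $|\boldsymbol m|=\sum m_j$, $\boldsymbol m!=\prod m_j!$, componentwise order. *)

(* Defs.v *)
From mathcomp Require Import all_boot all_order all_algebra.
Set Implicit Arguments. Unset Strict Implicit. Unset Printing Implicit Defensive.
Import Order.TTheory GRing.Theory Num.Theory.

(* A finitely supported multi-index m in N_0^N is represented by a finite
   sequence [m_0; ...; m_(n-1)] (all later entries are 0).  Trailing zeros
   do not affect any of the quantities below. *)
Definition mabs (m : seq nat) : nat := \sum_(i <- m) i.
Definition mfact (m : seq nat) : nat := \prod_(i <- m) i`!.
Definition mzero (m : seq nat) : bool := all (fun i => i == 0) m.

Fixpoint below (m : seq nat) : seq (seq nat) :=
  match m with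
  | [::] => [:: [::]]
  | a :: m' => [seq i :: w | i <- iota 0 a.+1, w <- below m']
  end.

(* P_m via recursion on |m| (fuel = |m| suffices, since w < m => |w| < |m|) *)
Fixpoint Paux (d : nat) (fuel : nat) (m : seq nat) {struct fuel} : rat :=
  if mzero m then 1%R else
  match fuel with
  | 0 => 1%R
  | f.+1 =>
      (((mabs m + d)`!)%:R / ((mfact m * d`!)%:R) +
       \sum_(w <- below m | w != m) Paux d f w * ((mabs m - mabs w).+1`!)%:R)%R
  end.

Definition PP (d : nat) (m : seq nat) : rat := Paux d (mabs m) m.

Fixpoint taus (n : nat) : seq nat :=
  match n with
  | 0 => [:: 1]
  | n'.+1 => let s := taus n' in
             rcons s (\sum_(j < n'.+1) (n'.+1 - j + 1) * nth 0 s j)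
  end.
Definition tau (k : nat) : nat := nth 0 (taus k) k.

(* Main.v *)
Require Import Defs.
From mathcomp Require Import all_boot all_order all_algebra.
From mathcomp Require Import ring lra zify.
Import Order.TTheory GRing.Theory Num.Theory.

Lemma mabs_cons a m : mabs (a :: m) = a + mabs m.
Proof. by rewrite /mabs big_cons. Qed.

Lemma mzeroE m : mzero m = (mabs m == 0).
Proof.
elim: m => [|a m IH]; first by rewrite /mabs big_nil.
by rewrite mabs_cons addn_eq0 -IH.
Qed.

Lemma below_cons a m : below (a :: m) = [seq i :: w | i <- iota 0 a.+1, w <- below m].
Proof. by []. Qed.

Lemma below_prop m w : w \in below m ->
  mabs w <= mabs m /\ (mabs w = mabs m -> w = m).
Proof.
elim: m w => [|a m IH] w.
  by rewrite /= inE => /eqP ->.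
rewrite below_cons.
move/allpairsPdep => [i [w' []]].
rewrite mem_iota => /andP [_ Hi] Hw' ->.
have [H1 H2] := IH _ Hw'.
rewrite !mabs_cons; split; first by lia.
move=> E. have Ei : i = a by lia.
rewrite Ei H2 //; lia.
Qed.

Lemma taus_nth k j : j <= k -> nth 0 (taus k) j = tau j.
Proof.
elim: k j => [|k IH] j Hj.
  by have -> : j = 0 by lia.
have Hs : size (taus k) = k.+1.
  by elim: (k) => [|k' IHk] //=; rewrite size_rcons IHk.
case: (ltnP j k.+1) => Hjk.
  by rewrite /= nth_rcons Hs Hjk IH.
by have -> : j = k.+1 by lia.
Qed.

Lemma tauS n : tau n.+1 = \sum_(j < n.+1) (n.+1 - j + 1) * tau j.
Proof.
have Hs : size (taus n) = n.+1.
  by elim: (n) => [|k' IHk] //=; rewrite size_rcons IHk.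
rewrite /tau /= nth_rcons Hs ltnn eqxx.
apply: eq_bigr => j _; rewrite taus_nth //; by have := ltn_ord j; lia.
Qed.

Lemma factK k n d' : k <= n -> n`! * (k + d')`! <= (n + d')`! * k`!.
Proof.
elim: n => [|n IH] Hk.
  have -> : k = 0 by lia. by rewrite mulnC.
case: (ltnP k n.+1) => H.
  have := IH H. rewrite factS addSn factS => H2.
  rewrite -mulnA -[X in _ <= X]mulnA.
  apply: leq_mul; first by lia.
  exact: H2.
have -> : k = n.+1 by lia. by rewrite mulnC.
Qed.

Lemma termK n j d' : j <= n ->
  'C(n, j) * (j + d')`! * (n - j).+1`! <= (n - j + 1) * (n + d')`!.
Proof.
move=> Hj.
have H1 := bin_fact Hj. have H2 := @factK j n d' Hj.
rewrite factS.
have Hp : 0 < j`! by apply: fact_gt0.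
rewrite -(leq_pmul2r Hp).
have -> : 'C(n, j) * (j + d')`! * ((n - j).+1 * (n - j)`!) * j`!
   = (n - j + 1) * (n`! * (j + d')`!).
  rewrite -H1; ring.
rewrite -mulnA leq_mul2l H2; by rewrite orbT.
Qed.
Local Open Scope ring_scope.

Definition T (n : nat) (h : nat -> rat) : rat := \sum_(k < n.+1) ('C(n, k))%:R * h k.

Lemma T_S n h : T n.+1 h = T n h + T n (fun k => h k.+1).
Proof.
rewrite /T big_ord_recl /=.
under eq_bigr => i _ do rewrite /bump /= binS natrD mulrDl.
rewrite big_split /= addrA; congr (_ + _).
rewrite [X in _ = X]big_ord_recl big_ord_recr /= !bin0.
rewrite bin_small // mul0r addr0; congr (_ + _); apply: eq_bigr => i _.
Qed.

Lemma T_ge0 n h : (forall k, 0 <= h k) -> 0 <= T n h.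
Proof. move=> H; apply: sumr_ge0 => i _; by rewrite mulr_ge0. Qed.

Lemma T_mono n a h : (forall k, 0 <= h k) -> T n h <= T (n + a) h.
Proof.
move=> H; elim: a => [|a IH]; first by rewrite addn0.
rewrite addnS T_S; apply: (le_trans IH); rewrite lerDl; exact: T_ge0.
Qed.

Lemma T_shift a n (h : nat -> rat) : (forall k, 0 <= h k) ->
  \sum_(i < a.+1) T n (fun k => h (i + k)%N) <= T (n + a) h.
Proof.
elim: a h => [|a IH] h H.
  by rewrite big_ord1 addn0.
rewrite big_ord_recl /= addnS T_S.
apply: lerD; first exact: T_mono.
have := IH (fun k => h k.+1) (fun k => H _).
congr (_ <= _); apply: eq_bigr => i _; rewrite /bump /=.
Qed.

Lemma below_sum m h : (forall k, 0 <= h k) ->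
  \sum_(w <- below m) h (mabs w) <= T (mabs m) h.
Proof.
elim: m h => [|a m IH] h H.
  by rewrite /= big_seq1 /mabs big_nil /T big_ord1 bin0 mul1r.
rewrite below_cons big_allpairs_dep [mabs (a :: m)]mabs_cons [(a + _)%N]addnC.
have HS := @T_shift a (mabs m) h H. have -> : iota 0 a.+1 = index_iota 0 a.+1 by rewrite /index_iota subn0. rewrite big_mkord. apply: (le_trans _ HS).
apply: ler_sum => i _.
under eq_bigr => w _ do rewrite mabs_cons.
exact: IH.
Qed.

Definition G (d' k : nat) : rat := ((k + d')`!)%:R / (d'`!)%:R.
Definition bnd (d' k : nat) : rat :=
  if k == 0%N then 1 else 2 * (tau k)%:R * G d' k.

Lemma G_ge0 d' k : 0 <= G d' k.
Proof. by rewrite /G divr_ge0 ?ler0n. Qed.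

Lemma bnd_ge0 d' k : 0 <= bnd d' k.
Proof.
rewrite /bnd; case: ifP => _ //; rewrite mulr_ge0 ?G_ge0 //.
by rewrite mulr_ge0 ?ler0n.
Qed.

Lemma ratio (a b c e : nat) : (0 < b)%N -> (0 < e)%N -> (a * e <= c * b)%N ->
  a%:R / b%:R <= c%:R / e%:R :> rat.
Proof.
move=> Hb He H.
rewrite ler_pdivrMr ?ltr0n // mulrAC ler_pdivlMr ?ltr0n // -!natrM ler_nat.
exact: H.
Qed.

Lemma sameD (X Y D : nat) : (0 < D)%N -> (X <= Y)%N -> X%:R / D%:R <= Y%:R / D%:R :> rat.
Proof. move=> HD H; apply: ratio => //; exact: leq_mul. Qed.

Lemma final_ineq d' (m : seq nat) n' (f : nat -> rat) :
  mabs m = n'.+1 ->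
  ((mabs m + d'.+1)`!)%:R / ((mfact m * d'.+1`!)%:R) +
  \sum_(k < n'.+1) ('C(n'.+1, k))%:R * (bnd d' k * ((n'.+1 - k).+1`!)%:R)
  <= 2 * (tau n'.+1)%:R * G d' n'.+1.
Proof.
move=> Hn; rewrite Hn.
set n := n'.+1.
have HD : (0 < d'`!)%N by apply: fact_gt0.
rewrite tauS natr_sum big_ord_recl big_ord_recl /= bin0.
rewrite /bnd eqxx mul1r mul1r subn0.
have -> : tau 0 = 1%N by [].
rewrite addrA mulrDr mulrDl mulr_sumr mulr_suml.
apply: lerD.
  have -> : 2 * ((n + 1) * 1)%:R * G d' n =
     ((n + 1) * (n + d')`!)%:R / (d'`!)%:R + ((n + 1) * (n + d')`!)%:R / (d'`!)%:R.
    rewrite /G !natrM; ring.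
  apply: lerD.
    have Hm : (0 < mfact m)%N.
      rewrite /mfact; elim: (m) => [|x s IH]; first by rewrite big_nil.
      by rewrite big_cons muln_gt0 fact_gt0.
    apply: ratio => //; first by rewrite muln_gt0 fact_gt0 Hm.
    rewrite addnS factS factS.
    nia.
  rewrite -[X in X <= _]divr1 -[1]/(1%:R) -(fact0).
  apply: ratio => //.
  have := @factK 0 n d' (leq0n _); rewrite add0n factS fact0; nia.
apply: ler_sum => i _.
set j := bump 0 i.
rewrite /j /bump /= add1n.
have Hj : (i.+1 <= n)%N by have := ltn_ord i; rewrite /n; lia.
have H := @termK n i.+1 d' Hj.
have -> : 'C(n, i.+1)%:R * (2 * (tau i.+1)%:R * G d' i.+1 * ((n - i.+1).+1`!)%:R)
    = (2 * tau i.+1 * ('C(n, i.+1) * (i.+1 + d')`! * (n - i.+1).+1`!))%:R / (d'`!)%:R.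
  rewrite /G !natrM; ring.
have -> : 2 * ((n - i.+1 + 1) * tau i.+1)%:R * G d' n
    = (2 * tau i.+1 * ((n - i.+1 + 1) * (n + d')`!))%:R / (d'`!)%:R.
  rewrite /G !natrM; ring.
apply: sameD => //.
by rewrite leq_mul2l H orbT.
Qed.

Lemma main d' f m : (mabs m <= f)%N -> Paux d'.+1 f m <= bnd d' (mabs m).
Proof.
elim: f m => [|f IH] m Hm.
  have E : mabs m = 0%N by lia.
  by rewrite /= E /bnd eqxx; case: (mzero m).
rewrite /=; case Hz: (mzero m).
  by move: Hz; rewrite mzeroE => /eqP ->; rewrite /bnd eqxx.
move: Hz; rewrite mzeroE => /negbT Hz.
set n := mabs m.
have [n' Hn] : exists n', n = n'.+1 by exists n.-1; rewrite /n; lia.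
pose h k := if (k < n)%N then bnd d' k * ((n - k).+1`!)%:R else 0.
have h0 : forall k, 0 <= h k.
  move=> k; rewrite /h; case: ifP => _ //; by rewrite mulr_ge0 ?bnd_ge0 ?ler0n.
have FI := final_ineq d' m n' (fun _ => 0) Hn. have -> : bnd d' n = 2 * (tau n'.+1)%:R * G d' n'.+1 by rewrite Hn. apply: le_trans FI.
apply: lerD; first exact: le_refl.
apply: (@le_trans _ _ (\sum_(w <- below m | w != m) h (mabs w))).
  rewrite big_seq_cond [X in _ <= X]big_seq_cond; apply: ler_sum => w /andP [Hw Hne].
  have [H1 H2] := @below_prop m w Hw.
  have Hlt : (mabs w < n)%N.
    rewrite ltn_neqAle H1 andbT; apply/eqP => E; move: Hne; by rewrite H2 ?eqxx.
  rewrite /h Hlt; apply: ler_wpM2r; first by rewrite ler0n.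
  apply: IH; rewrite /n in Hlt; lia.
apply: (@le_trans _ _ (\sum_(w <- below m) h (mabs w))).
  rewrite [X in _ <= X](bigID (fun w => w != m)) /= lerDl.
  by apply: sumr_ge0 => w _.
eapply le_trans; first exact: (below_sum m h h0).
rewrite -/n /T big_ord_recr /= {2}/h ltnn mulr0 addr0 /h. clear h h0 IH Hm Hz. clearbody n. subst n. apply: ler_sum => k _. by rewrite ltn_ord.
Qed.

Theorem lemmaA7 (d : nat) (hd : (0 < d)%N) (m : seq nat) (hm : ~~ mzero m) :
  PP d m <= (2 * tau (mabs m) * (mabs m + d - 1)`!)%:R / ((d - 1)`!)%:R.
Proof.
case: d hd => [//|d'] _.
have := @main d' (mabs m) m (leqnn _).
rewrite /PP /bnd; move: hm; rewrite mzeroE => /negbTE ->.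
have -> : (mabs m + d'.+1 - 1 = mabs m + d')%N by lia.
have -> : (d'.+1 - 1 = d')%N by lia.
by rewrite /G !natrM mulrA.
Qed.
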